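(* Let $\kappa,\lambda$ be regular infinite cardinals with $\kappa\vartriangleleft\lambda=\lambda^{<\lambda}$, and let $(\mathcal{C},E)$ be a $\kappa$-site such that $\mathcal{C}$ has fewer than $\lambda$ morphisms and $|E|<\lambda$. For $x\in\mathcal{C}$ let $ev_x\in\mathbf{Set}^{Mod(\mathcal{C})_{<\lambda}}$ be the functor $M\mapsto M(x)$. Then the closure of $\{ev_x: x\in\mathcal{C}\}$ in $\mathbf{Set}^{Mod(\mathcal{C})_{<\lambda}}$ under limits of $\kappa$-cofiltered diagrams with fewer than $\lambda$ morphisms is a generating set of $\mathbf{Set}^{Mod(\mathcal{C})_{<\lambda}}$.
   Context: ''$<\kappa$-limits'' are limits of diagrams with fewer than $\kappa$ morphisms; $\kappa$-lex means having/preserving them. $\kappa\vartriangleleft\lambda$ means: for every set $X$ with $|X|<\lambda$ the poset of subsets of $X$ of size $<\kappa$ has a cofinal subset of size $<\lambda$. A family is a set of morphisms with common codomain. A $\kappa$-site is a pair $(\mathcal{C},E)$ with $\mathcal{C}$ a small $\kappa$-lex category and $E$ a set of families containing $id:1\to1$. $Mod(\mathcal{C})$ is the category of $\kappa$-lex functors $\mathcal{C}\to\mathbf{Set}$ sending every family in $E$ to a jointly surjective family, with all natural transformations; $Mod(\mathcal{C})_{<\lambda}$ is its full subcategory of functors $M$ with $|M(x)|<\lambda$ for all $x$. *)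

(* Defs.v *)
From Stdlib Require Import Classical FunctionalExtensionality.

Set Implicit Arguments.
Unset Strict Implicit.

Definition le_card (A B : Type) : Prop :=
  exists f : A -> B, forall x y, f x = f y -> x = y.

Definition lt_card (A B : Type) : Prop := le_card A B /\ ~ le_card B A.

Definition infinite_card (K : Type) : Prop := le_card nat K.

Definition regular_infinite (K : Type) : Prop :=
  infinite_card K /\
  forall (I : Type) (X : I -> Type),
    lt_card I K -> (forall i, lt_card (X i) K) -> lt_card {i : I & X i} K.

Definition lam_lt_lam_eq (L : Type) : Prop :=
  forall X : Type, lt_card X L -> le_card (X -> L) L.

Definition sharply_less (K L : Type) : Prop :=
  forall X : Type, lt_card X L ->
    exists Q : (X -> Prop) -> Prop,
      (forall S, Q S -> lt_card {x : X | S x} K) /\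
      (forall S, lt_card {x : X | S x} K ->
         exists T, Q T /\ forall x, S x -> T x) /\
      lt_card {S : X -> Prop | Q S} L.

Record PreCat := {
  ob :> Type;
  hom : ob -> ob -> Type;
  idm : forall a, hom a a;
  comp : forall a b c, hom b c -> hom a b -> hom a c
}.
Arguments hom {_} a b.
Arguments idm {_} a.
Arguments comp {_ a b c} g f.

Definition isCat (C : PreCat) : Prop :=
  (forall (a b : C) (f : hom a b), comp (idm b) f = f) /\
  (forall (a b : C) (f : hom a b), comp f (idm a) = f) /\
  (forall (a b c d : C) (f : hom a b) (g : hom b c) (h : hom c d),
      comp h (comp g f) = comp (comp h g) f).

Definition Mor (C : PreCat) : Type := {a : C & {b : C & hom a b}}.

Record Functor (C D : PreCat) := {
  fob :> C -> D;
  fmap : forall a b, hom a b -> hom (fob a) (fob b)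
}.
Arguments fmap {C D} f {a b} _.

Definition isFunctor (C D : PreCat) (F : Functor C D) : Prop :=
  (forall a : C, fmap F (idm a) = idm (F a)) /\
  (forall (a b c : C) (f : hom a b) (g : hom b c),
      fmap F (comp g f) = comp (fmap F g) (fmap F f)).

Definition fcomp (I C D : PreCat) (F : Functor C D) (G : Functor I C)
  : Functor I D :=
  {| fob := fun i => F (G i); fmap := fun i j f => fmap F (fmap G f) |}.

Definition isCone (J C : PreCat) (D : Functor J C) (a : C)
  (p : forall j, hom a (D j)) : Prop :=
  forall j k (f : hom j k), comp (fmap D f) (p j) = p k.

Arguments isCone {J C} D a p.

Definition isLimit (J C : PreCat) (D : Functor J C) (a : C)
  (p : forall j, hom a (D j)) : Prop :=
  forall (b : C) (q : forall j, hom b (D j)), isCone D b q ->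
    exists u : hom b a,
      (forall j, comp (p j) u = q j) /\
      (forall u' : hom b a, (forall j, comp (p j) u' = q j) -> u' = u).

Arguments isLimit {J C} D a p.

Definition isTerminal (C : PreCat) (t : C) : Prop :=
  forall b : C, exists u : hom b t, forall u' : hom b t, u' = u.

Definition kappa_lex_cat (K : Type) (C : PreCat) : Prop :=
  isCat C /\
  forall (J : PreCat) (D : Functor J C), isCat J -> lt_card (Mor J) K ->
    isFunctor D -> exists (a : C) (p : forall j, hom a (D j)),
      isCone D a p /\ isLimit D a p.

Definition kappa_lex_functor (K : Type) (C E : PreCat) (F : Functor C E)
  : Prop :=
  forall (J : PreCat) (D : Functor J C), isCat J -> lt_card (Mor J) K ->
    isFunctor D -> forall (a : C) (p : forall j, hom a (D j)),
      isCone D a p -> isLimit D a p ->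
      isLimit (fcomp F D) (F a) (fun j => fmap F (p j)).

Definition kappa_cofiltered (K : Type) (J : PreCat) : Prop :=
  forall (I : PreCat) (D : Functor I J), isCat I -> lt_card (Mor I) K ->
    isFunctor D -> exists (j : J) (p : forall i, hom j (D i)), isCone D j p.

Definition generating (C : PreCat) (S : C -> Prop) : Prop :=
  forall (a b : C) (f g : hom a b), f <> g ->
    exists s : C, S s /\ exists h : hom s a, comp f h <> comp g h.

Definition TypeCat : PreCat :=
  {| ob := Type; hom := fun A B => A -> B;
     idm := fun A (x : A) => x;
     comp := fun A B C (g : B -> C) (f : A -> B) (x : A) => g (f x) |}.

Unset Implicit Arguments.
Record NT (A : PreCat) (F G : Functor A TypeCat) := {
  eta : forall a : A, (F a : Type) -> (G a : Type);
  natural : forall a b (f : hom a b) (x : F a),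
      eta b (fmap F f x) = fmap G f (eta a x)
}.
Arguments NT {A} F G.
Arguments Build_NT {A F G} eta natural.
Arguments eta {A F G} n a x.
Arguments natural {A F G} n a b f x.
Set Implicit Arguments.

Definition idNT (A : PreCat) (F : Functor A TypeCat) : NT F F.
Proof. refine {| eta := fun a (x : F a) => x |}. intros; reflexivity. Defined.

Definition compNT (A : PreCat) (F G H : Functor A TypeCat)
  (m : NT G H) (n : NT F G) : NT F H.
Proof.
  refine {| eta := fun a (x : F a) => eta m a (eta n a x) |}.
  intros a b f x. rewrite (natural n). apply (natural m).
Defined.

(* A kappa-site (C, E): E is a set of families, given as an index set Eix,
   for each index a codomain cod e and the family fam e, a set of morphisms
   into cod e (a predicate on morphisms with codomain cod e). *)
Definition kappa_site (K : Type) (C : PreCat) (Eix : Type)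
  (cod : Eix -> C) (fam : forall e d, hom d (cod e) -> Prop) : Prop :=
  kappa_lex_cat K C /\
  (* E contains the family {id : 1 -> 1}, 1 a terminal object *)
  exists e : Eix, isTerminal (cod e) /\
    forall d (f : hom d (cod e)),
      fam e d f <-> existT (fun d => hom d (cod e)) d f
                    = existT (fun d => hom d (cod e)) (cod e) (idm (cod e)).

Arguments kappa_site K {C Eix} cod fam.

Record ModObj (K L : Type) (C : PreCat) (Eix : Type)
  (cod : Eix -> C) (fam : forall e d, hom d (cod e) -> Prop) := {
  mfun : Functor C TypeCat;
  mfun_functor : isFunctor mfun;
  mfun_lex : kappa_lex_functor K mfun;
  mfun_cover : forall (e : Eix) (y : mfun (cod e)),
      exists d (f : hom d (cod e)) (x : mfun d), fam e d f /\ fmap mfun f x = y;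
  mfun_small : forall x : C, lt_card (mfun x) L
}.

Arguments ModObj K L {C Eix} cod fam.
Arguments mfun {K L C Eix cod fam} m.

Definition ModCat (K L : Type) (C : PreCat) (Eix : Type)
  (cod : Eix -> C) (fam : forall e d, hom d (cod e) -> Prop) : PreCat :=
  {| ob := ModObj K L cod fam;
     hom := fun M N => NT (mfun M) (mfun N);
     idm := fun M => idNT (mfun M);
     comp := fun M N P g f => compNT g f |}.

Arguments ModCat K L {C Eix} cod fam.

Record SFObj (A : PreCat) := {
  sfun : Functor A TypeCat;
  sfun_functor : isFunctor sfun
}.

Definition FunCat (A : PreCat) : PreCat :=
  {| ob := SFObj A;
     hom := fun F G => NT (sfun F) (sfun G);
     idm := fun F => idNT (sfun F);
     comp := fun F G H g f => compNT g f |}.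

Definition ev_fun (K L : Type) (C : PreCat) (Eix : Type)
  (cod : Eix -> C) (fam : forall e d, hom d (cod e) -> Prop) (x : C)
  : Functor (ModCat K L cod fam) TypeCat :=
  @Build_Functor (ModCat K L cod fam) TypeCat
    (fun M : ModCat K L cod fam => (mfun M x : Type))
    (fun M N (h : NT (mfun M) (mfun N)) => eta h x).

Arguments ev_fun K L {C Eix} cod fam x.

Lemma ev_fun_functor (K L : Type) (C : PreCat) (Eix : Type)
  (cod : Eix -> C) (fam : forall e d, hom d (cod e) -> Prop) (x : C) :
  isFunctor (ev_fun K L cod fam x).
Proof. split; intros; reflexivity. Qed.
Arguments ev_fun_functor K L {C Eix} cod fam x.

Definition ev (K L : Type) (C : PreCat) (Eix : Type)
  (cod : Eix -> C) (fam : forall e d, hom d (cod e) -> Prop) (x : C)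
  : FunCat (ModCat K L cod fam) :=
  {| sfun := ev_fun K L cod fam x; sfun_functor := ev_fun_functor K L cod fam x |}.

Arguments ev K L {C Eix} cod fam x.

Inductive ev_closure (K L : Type) (C : PreCat) (Eix : Type)
  (cod : Eix -> C) (fam : forall e d, hom d (cod e) -> Prop)
  : FunCat (ModCat K L cod fam) -> Prop :=
| evc_base : forall x : C, ev_closure (ev K L cod fam x)
| evc_lim : forall (J : PreCat) (D : Functor J (FunCat (ModCat K L cod fam)))
      (a : FunCat (ModCat K L cod fam)) (p : forall j, hom a (D j)),
      isCat J -> kappa_cofiltered K J -> lt_card (Mor J) L ->
      isFunctor D -> (forall j, ev_closure (D j)) ->
      isCone D a p -> isLimit D a p -> ev_closure a.

Arguments ev_closure K L {C Eix} cod fam _.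

(* Main.v *)
Require Import Defs.
From Stdlib Require Import Classical FunctionalExtensionality ProofIrrelevance ClassicalEpsilon List.
From Stdlib Require Import Program.Equality.

Lemma le_refl (A : Type) : le_card A A.
Proof. exists (fun x => x); auto. Qed.

Lemma le_trans' (A B D : Type) : le_card A B -> le_card B D -> le_card A D.
Proof.
  intros [f Hf] [g Hg]. exists (fun x => g (f x)); auto.
Qed.

Lemma le_lt (A B K : Type) : le_card A B -> lt_card B K -> lt_card A K.
Proof.
  intros H [H1 H2]. split. eapply le_trans'; eauto.
  intro H3. apply H2. eapply le_trans'; eauto.
Qed.

Lemma bool_lt (K : Type) : infinite_card K -> lt_card bool K.
Proof.
  intros HK. split.
  - eapply le_trans'; [|exact HK].
    exists (fun b : bool => if b then 1 else 0).
    intros [] [] H; try discriminate; reflexivity.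
  - intros HKb. destruct (le_trans' _ _ _ HK HKb) as [g Hg].
    destruct (g 0) eqn:E0, (g 1) eqn:E1, (g 2) eqn:E2;
    try (assert (0 = 1) by (apply Hg; congruence); discriminate);
    try (assert (0 = 2) by (apply Hg; congruence); discriminate);
    try (assert (1 = 2) by (apply Hg; congruence); discriminate).
Qed.

Lemma sig_lt (K : Type) (HK : regular_infinite K) (I : Type) (X : I -> Type) :
  lt_card I K -> (forall i, lt_card (X i) K) -> lt_card {i : I & X i} K.
Proof. intros; apply (proj2 HK); auto. Qed.

Lemma prod_lt (K : Type) (HK : regular_infinite K) (A B : Type) :
  lt_card A K -> lt_card B K -> lt_card (A * B) K.
Proof.
  intros HA HB. apply le_lt with {a : A & B}.
  - exists (fun p => existT (fun _ => B) (fst p) (snd p)).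
    intros [a b] [a' b'] H. simpl in H.
    pose proof (f_equal (@projT1 _ _) H) as E1. simpl in E1. subst.
    apply Eqdep.EqdepTheory.inj_pair2 in H. subst; reflexivity.
  - apply sig_lt; auto.
Qed.

Lemma sum_lt (K : Type) (HK : regular_infinite K) (A B : Type) :
  lt_card A K -> lt_card B K -> lt_card (A + B) K.
Proof.
  intros HA HB. apply le_lt with {b : bool & if b then A else B}.
  - exists (fun p => match p return {b : bool & if b then A else B} with
               | inl a => existT (fun b : bool => if b then A else B) true a
               | inr b => existT (fun b : bool => if b then A else B) false b end).
    intros [a|b] [a'|b'] H;
    pose proof (f_equal (@projT1 _ _) H) as E1; simpl in E1; try discriminate;
    apply Eqdep.EqdepTheory.inj_pair2 in H; subst; reflexivity.
  - apply sig_lt; auto. apply bool_lt, (proj1 HK). intros []; auto.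
Qed.

Lemma union_small (K : Type) (HK : regular_infinite K) (X I : Type) (F : I -> X -> Prop) :
  lt_card I K -> (forall i, lt_card {x | F i x} K) -> lt_card {x | exists i, F i x} K.
Proof.
  intros HI HF. apply le_lt with {i : I & {x | F i x}}.
  - exists (fun p : {x | exists i, F i x} => let (x, H) := p in
       let (i, Hi) := constructive_indefinite_description _ H in
       existT (fun i => {x | F i x}) i (exist _ x Hi)).
    intros [x H] [y H'].
    destruct (constructive_indefinite_description _ H) as [i Hi].
    destruct (constructive_indefinite_description _ H') as [i' Hi'].
    intro E. pose proof (f_equal (fun p => proj1_sig (projT2 p)) E) as E2. simpl in E2.
    subst. f_equal. apply proof_irrelevance.
  - apply sig_lt; auto.
Qed.

Lemma list_small (K : Type) (HK : regular_infinite K) (X : Type) (l : list X) :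
  lt_card {x | In x l} K.
Proof.
  induction l as [|a l IH].
  - apply le_lt with bool. exists (fun _ => true). intros [x []].
    apply bool_lt, (proj1 HK).
  - apply le_lt with {x | exists b : bool, if b then x = a else In x l}.
    + exists (fun p : {x | In x (a :: l)} => let (x, H) := p in exist (fun x => exists b : bool, if b then x = a else In x l) x
         (match H with or_introl e => ex_intro _ true (eq_sym e) | or_intror h => ex_intro _ false h end)).
      intros [x H] [y H'] E. pose proof (f_equal (@proj1_sig _ _) E) as E2. simpl in E2.
      subst. f_equal. apply proof_irrelevance.
    + apply union_small; auto. apply bool_lt, (proj1 HK).
      intros [].
      * apply le_lt with bool.
        -- exists (fun _ => true). intros [x Hx] [y Hy] _. simpl in *. subst. reflexivity.
        -- apply bool_lt, (proj1 HK).
      * exact IH.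
Qed.
Lemma sig_eq_pi (A : Type) (P : A -> Prop) (x y : sig P) : proj1_sig x = proj1_sig y -> x = y.
Proof. destruct x, y; simpl; intro; subst; f_equal; apply proof_irrelevance. Qed.

Definition castm (C : PreCat) (a b : C) (e : a = b) : hom a b :=
  match e in _ = b0 return hom a b0 with eq_refl => idm a end.
Arguments castm {C a b} e.

Lemma castm_refl (C : PreCat) (a : C) (e : a = a) : castm e = idm a.
Proof. rewrite (Eqdep.EqdepTheory.UIP_refl _ _ e). reflexivity. Qed.

Lemma NT_ext (A : PreCat) (F G : Functor A TypeCat) (n m : NT F G) :
  (forall a x, eta n a x = eta m a x) -> n = m.
Proof.
  destruct n as [en nn], m as [em nm]; simpl; intros H.
  assert (en = em) by (apply functional_extensionality_dep; intro a;
                       apply functional_extensionality; apply H).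
  subst. f_equal. apply proof_irrelevance.
Qed.

Section Shape.
Context (K L : Type) (C : PreCat) (Eix : Type)
  (cod : Eix -> C) (fam : forall e d, hom d (cod e) -> Prop).
Context (HC : isCat C).
Context (M : ModObj K L cod fam).

Definition X : Type := {f : Mor C & (mfun M (projT1 f) : Type)}.
Definition xdom (s : X) : C := projT1 (projT1 s).
Definition xcod (s : X) : C := projT1 (projT2 (projT1 s)).
Definition xarr (s : X) : hom (xdom s) (xcod s) := projT2 (projT2 (projT1 s)).
Definition xelt (s : X) : (mfun M (xdom s) : Type) := projT2 s.

Definition R2 (s1 s2 : X) : Prop :=
  existT (fun a : C => (mfun M a : Type)) (xcod s1) (fmap (mfun M) (xarr s1) (xelt s1))
  = existT (fun a : C => (mfun M a : Type)) (xdom s2) (xelt s2).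

Definition Cons : Type := {p : X * X | R2 (fst p) (snd p)}.
Definition c1 (c : Cons) : X := fst (proj1_sig c).
Definition c2 (c : Cons) : X := snd (proj1_sig c).
Definition GO : Type := (X + Cons)%type.
Definition pk (c : Cons) (b : bool) : X := if b then c1 c else c2 c.

Inductive GH : GO -> GO -> Type :=
| gid : forall o, GH o o
| gedge : forall c b, GH (inl (pk c b)) (inr c).

Definition gcomp {x y z : GO} (g : GH y z) (f : GH x y) : GH x z.
Proof.
  destruct f as [o | c b]. exact g.
  remember (inr c) as y eqn:Hy. destruct g as [o' | c' b'].
  - subst. exact (gedge c b).
  - discriminate.
Defined.

Definition eR2 (c : Cons) : xcod (c1 c) = xdom (c2 c) :=
  f_equal (@projT1 _ _) (proj2_sig c).

Definition Dob (o : GO) : C :=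
  match o with inl s => xdom s | inr c => xdom (c2 c) end.

Definition base (c : Cons) (b : bool) : hom (Dob (inl (pk c b))) (Dob (inr c)) :=
  match b return hom (xdom (pk c b)) (xdom (c2 c)) with
  | true => comp (castm (eR2 c)) (xarr (c1 c))
  | false => idm (xdom (c2 c))
  end.

Definition Dm {x y : GO} (g : GH x y) : hom (Dob x) (Dob y) :=
  match g in GH x0 y0 return hom (Dob x0) (Dob y0) with
  | gid o => idm (Dob o)
  | gedge c b => base c b
  end.

Lemma gcomp_id_l (x y : GO) (f : GH x y) : gcomp (gid y) f = f.
Proof. destruct f; reflexivity. Qed.

Lemma GH_inr (c : Cons) (z : GO) (g : GH (inr c) z) :
  existT (fun z => GH (inr c) z) z g = existT _ (inr c) (gid (inr c)).
Proof. dependent destruction g. reflexivity. Qed.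

Lemma gcomp_edge (c : Cons) (b : bool) (z : GO) (g : GH (inr c) z) :
  existT (fun z => GH (inl (pk c b)) z) z (gcomp g (gedge c b))
  = existT _ (inr c) (gedge c b).
Proof. dependent destruction g. reflexivity. Qed.

Definition inS (S : X -> Prop) (o : GO) : Prop :=
  match o with inl s => S s | inr c => S (c1 c) /\ S (c2 c) end.

Definition Shape (S : X -> Prop) : PreCat :=
  {| ob := {o : GO | inS S o};
     hom := fun x y => GH (proj1_sig x) (proj1_sig y);
     idm := fun x => gid (proj1_sig x);
     comp := fun x y z g f => gcomp g f |}.

Definition DS (S : X -> Prop) : Functor (Shape S) C :=
  @Build_Functor (Shape S) C (fun x => Dob (proj1_sig x)) (fun x y g => Dm g).

Lemma Shape_cat (S : X -> Prop) : isCat (Shape S).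
Proof.
  split; [|split]; simpl.
  - intros a b f. apply gcomp_id_l.
  - intros a b f. reflexivity.
  - intros [a Ha] [b Hb] [c Hc] [d Hd] f g h; simpl in *.
    destruct f as [o|c0 b0]; simpl. reflexivity.
    dependent destruction g. simpl. dependent destruction h. reflexivity.
Qed.

Lemma DS_functor (S : X -> Prop) : isFunctor (DS S).
Proof.
  destruct HC as [Hl [Hr Ha]].
  split; simpl.
  - intros a. reflexivity.
  - intros [a Ha'] [b Hb] [c Hc] f g; simpl in *.
    destruct f as [o|c0 b0]; simpl. rewrite Hr. reflexivity.
    dependent destruction g. simpl. rewrite Hl. reflexivity.
Qed.


Definition tag {x y : GO} (g : GH x y) : bool * bool :=
  match g with gid _ => (true, true) | gedge _ b => (false, b) end.

Lemma Mor_small (HK : regular_infinite K) {S : X -> Prop} :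
  lt_card {x | S x} K -> lt_card (Mor (Shape S)) K.
Proof.
  intros HS.
  assert (HO : lt_card {o : GO | inS S o} K).
  { apply le_lt with ({x | S x} + ({x | S x} * {x | S x}))%type.
    - exists (fun o : {o : GO | inS S o} =>
        match o return ({x | S x} + ({x | S x} * {x | S x}))%type with
        | exist _ (inl s) H => inl (exist S s H)
        | exist _ (inr c) H => inr (exist S (c1 c) (proj1 H), exist S (c2 c) (proj2 H))
        end).
      intros [[s|c] H] [[s'|c'] H'] E; try discriminate.
      + injection E; intros; subst. f_equal. apply proof_irrelevance.
      + injection E; intros E1 E2.
        assert (c = c').
        { destruct c as [[a b] Hc], c' as [[a' b'] Hc']. unfold c1, c2 in *; simpl in *.
          subst. f_equal. apply proof_irrelevance. }
        subst. f_equal. apply proof_irrelevance.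
    - apply sum_lt; auto. apply prod_lt; auto. }
  apply le_lt with ({o : GO | inS S o} * (bool * bool))%type.
  - exists (fun m : Mor (Shape S) => (projT1 (projT2 m), tag (projT2 (projT2 m)))).
    intros [[x Hx] [[y Hy] g]] [[x' Hx'] [[y' Hy'] g']] E; simpl in *.
    injection E; intros E1 E2. subst y'. assert (Hy = Hy') by apply proof_irrelevance. subst Hy'.
    dependent destruction g; dependent destruction g'; simpl in *; try discriminate.
    + assert (Hx = Hx') by apply proof_irrelevance. subst. reflexivity.
    + injection E1; intros; subst.
      assert (Hx = Hx') by apply proof_irrelevance. subst. reflexivity.
  - apply prod_lt; auto. apply prod_lt; auto; apply bool_lt, (proj1 HK).
Qed.

Definition Lim (S : X -> Prop) : Type :=
  {a : C & {p : forall j : Shape S, hom a (DS S j) |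
     isCone (DS S) a p /\ isLimit (DS S) a p}}.

Definition lapex {S} (l : Lim S) : C := projT1 l.
Definition lproj {S} (l : Lim S) : forall j : Shape S, hom (lapex l) (DS S j) :=
  proj1_sig (projT2 l).
Lemma lcone {S} (l : Lim S) : isCone (DS S) (lapex l) (lproj l).
Proof. exact (proj1 (proj2_sig (projT2 l))). Qed.
Lemma llim {S} (l : Lim S) : isLimit (DS S) (lapex l) (lproj l).
Proof. exact (proj2 (proj2_sig (projT2 l))). Qed.

Definition getLim (Hlex : kappa_lex_cat K C) (HK : regular_infinite K)
  (S : X -> Prop) (HS : lt_card {x | S x} K) : Lim S.
Proof.
  destruct (constructive_indefinite_description _
     (proj2 Hlex (Shape S) (DS S) (Shape_cat S) (Mor_small HK HS) (DS_functor S)))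
    as [a Ha].
  destruct (constructive_indefinite_description _ Ha) as [p Hp].
  exact (existT _ a (exist _ p Hp)).
Defined.

Definition cmpt {S} (l : Lim S) (s : X) (Hs : S s) : hom (lapex l) (xdom s) :=
  lproj l (exist (inS S) (inl s) Hs).

Lemma lim_constraint {S} (l : Lim S) (c : Cons) (H1 : S (c1 c)) (H2 : S (c2 c)) :
  comp (base c true) (cmpt l (c1 c) H1) = cmpt l (c2 c) H2.
Proof.
  destruct HC as [Hl [Hr Ha]].
  pose proof (lcone l (exist (inS S) (inl (c1 c)) H1) (exist (inS S) (inr c) (conj H1 H2))
               (gedge c true)) as E1.
  pose proof (lcone l (exist (inS S) (inl (c2 c)) H2) (exist (inS S) (inr c) (conj H1 H2))
               (gedge c false)) as E2.
  simpl in E1, E2. unfold cmpt. transitivity (lproj l (exist (inS S) (inr c) (conj H1 H2))).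
  exact E1. rewrite <- E2. simpl. apply Hl.
Qed.

Lemma lim_inr {S} (l : Lim S) (c : Cons) (Hc : inS S (inr c)) :
  lproj l (exist (inS S) (inr c) Hc) = cmpt l (c2 c) (proj2 Hc).
Proof.
  destruct HC as [Hl [Hr Ha]].
  pose proof (lcone l (exist (inS S) (inl (c2 c)) (proj2 Hc)) (exist (inS S) (inr c) Hc)
               (gedge c false)) as E2.
  simpl in E2. rewrite <- E2. simpl. rewrite Hl. reflexivity.
Qed.

Definition Mod := ModObj K L cod fam.

Lemma fmap_comp (N : Mod) (a b c : C) (f : hom a b) (g : hom b c) (x : mfun N a) :
  fmap (mfun N) (comp g f) x = fmap (mfun N) g (fmap (mfun N) f x).
Proof. rewrite (proj2 (mfun_functor N)). reflexivity. Qed.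

Lemma fmap_id (N : Mod) (a : C) (x : mfun N a) : fmap (mfun N) (idm a) x = x.
Proof. rewrite (proj1 (mfun_functor N)). reflexivity. Qed.

Lemma N_lim (HK : regular_infinite K) (N : Mod) {S} (HS : lt_card {x | S x} K) (l : Lim S) :
  isLimit (fcomp (mfun N) (DS S)) (mfun N (lapex l)) (fun j => fmap (mfun N) (lproj l j)).
Proof.
  exact (@mfun_lex _ _ _ _ _ _ N (Shape S) (DS S) (Shape_cat S) (Mor_small HK HS) (DS_functor S)
           _ _ (lcone l) (llim l)).
Qed.

Lemma lim_det (HK : regular_infinite K) (N : Mod) {S} (HS : lt_card {x | S x} K) (l : Lim S)
  (z1 z2 : mfun N (lapex l)) :
  (forall s (Hs : S s), fmap (mfun N) (cmpt l s Hs) z1 = fmap (mfun N) (cmpt l s Hs) z2) ->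
  z1 = z2.
Proof.
  intros Hcomp.
  assert (Hall : forall j, fmap (mfun N) (lproj l j) z1 = fmap (mfun N) (lproj l j) z2).
  { intros [[s|c] Hj]. apply Hcomp. rewrite !lim_inr. apply Hcomp. }
  destruct (N_lim HK N HS l unit (fun j _ => fmap (mfun N) (lproj l j) z1)) as [u [Hu Hun]].
  { intros j k f. apply functional_extensionality; intros []. simpl.
    rewrite <- fmap_comp. f_equal. apply (lcone l). }
  assert (E1 : (fun _ : unit => z1) = u) by (apply Hun; intro j; reflexivity).
  assert (E2 : (fun _ : unit => z2) = u).
  { apply Hun; intro j. apply functional_extensionality; intros []. simpl. symmetry. apply Hall. }
  exact (eq_trans (f_equal (fun h => h tt) E1) (eq_sym (f_equal (fun h => h tt) E2))).
Qed.

Lemma lim_exists (HK : regular_infinite K) (N : Mod) {S} (HS : lt_card {x | S x} K) (l : Lim S)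
  (n : forall s, S s -> (mfun N (xdom s) : Type))
  (compat : forall c (H1 : S (c1 c)) (H2 : S (c2 c)),
      fmap (mfun N) (base c true) (n _ H1) = n _ H2) :
  exists z, forall s (Hs : S s), fmap (mfun N) (cmpt l s Hs) z = n s Hs.
Proof.
  pose (q := fun j : Shape S =>
    match j as j0 return unit -> (mfun N (DS S j0) : Type) with
    | exist _ (inl s) H => fun _ => n s H
    | exist _ (inr c) H => fun _ => n (c2 c) (proj2 H)
    end).
  destruct (N_lim HK N HS l unit q) as [u [Hu Hun]].
  { intros [oj Hj] [ok Hk] f. apply functional_extensionality; intros []. simpl in *.
    destruct f as [o|c b]; simpl.
    - rewrite fmap_id. destruct o; f_equal; apply proof_irrelevance.
    - destruct b; simpl.
      + destruct Hk as [K1 K2]. rewrite (proof_irrelevance _ (proj2 (conj K1 K2)) K2). exact (compat c Hj K2).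
      + rewrite fmap_id. destruct Hk; simpl. f_equal; apply proof_irrelevance. }
  exists (u tt). intros s Hs. pose proof (f_equal (fun h => h tt) (Hu (exist _ (inl s) Hs))) as E.
  simpl in E. exact E.
Qed.

Definition inS_mono {S T : X -> Prop} (HST : forall x, T x -> S x) (o : GO) : inS T o -> inS S o :=
  match o return inS T o -> inS S o with
  | inl s => HST s
  | inr c => fun H => conj (HST _ (proj1 H)) (HST _ (proj2 H))
  end.

Lemma r_ex {S T : X -> Prop} (HST : forall x, T x -> S x) (lS : Lim S) (lT : Lim T) :
  exists r : hom (lapex lS) (lapex lT),
    forall s (Hs : T s), comp (cmpt lT s Hs) r = cmpt lS s (HST s Hs).
Proof.
  destruct (llim lT (lapex lS)
     (fun j => lproj lS (exist _ (proj1_sig j) (inS_mono HST _ (proj2_sig j))))) as [r [Hr _]].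
  { intros j k f. apply (lcone lS (exist _ (proj1_sig j) _) (exist _ (proj1_sig k) _) f). }
  exists r. intros s Hs. apply (Hr (exist _ (inl s) Hs)).
Qed.

Context (HK : regular_infinite K) (HL : regular_infinite L) (Hlex : kappa_lex_cat K C).
Context (Q : (X -> Prop) -> Prop)
  (HQ1 : forall S, Q S -> lt_card {x | S x} K)
  (HQ2 : forall S, lt_card {x | S x} K -> exists T, Q T /\ forall x, S x -> T x)
  (HQ3 : lt_card {S | Q S} L) (enc : {S | Q S} -> L) (Henc : forall x y, enc x = enc y -> x = y).

Definition JO : Type := {l : L | exists S (H : Q S), enc (exist _ S H) = l}.
Definition dec (j : JO) : X -> Prop :=
  proj1_sig (constructive_indefinite_description _ (proj2_sig j)).
Lemma dec_spec (j : JO) : exists H : Q (dec j), enc (exist _ (dec j) H) = proj1_sig j.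
Proof. unfold dec. destruct (constructive_indefinite_description _ _) as [S HS]. exact HS. Qed.
Lemma dec_Q (j : JO) : Q (dec j).
Proof. destruct (dec_spec j) as [H _]; exact H. Qed.
Lemma dec_small (j : JO) : lt_card {x | dec j x} K.
Proof. apply HQ1, dec_Q. Qed.

Definition jOf (S : X -> Prop) (H : Q S) : JO :=
  exist _ (enc (exist _ S H)) (ex_intro _ S (ex_intro _ H eq_refl)).
Lemma dec_jOf S H : dec (jOf S H) = S.
Proof.
  destruct (dec_spec (jOf S H)) as [H' E]. simpl in E. apply Henc in E.
  exact (f_equal (@proj1_sig _ _) E).
Qed.

Lemma cover (U : X -> Prop) : lt_card {x | U x} K -> exists j, forall x, U x -> dec j x.
Proof.
  intros HU. destruct (HQ2 U HU) as [T [HT HUT]]. exists (jOf T HT).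
  rewrite dec_jOf. exact HUT.
Qed.

Lemma JO_small : lt_card JO L.
Proof.
  apply le_lt with {S | Q S}; [|exact HQ3].
  exists (fun j => exist Q (dec j) (dec_Q j)).
  intros j j' E. apply sig_eq_pi.
  destruct (dec_spec j) as [H1 E1]. destruct (dec_spec j') as [H2 E2].
  rewrite <- E1, <- E2. f_equal. apply sig_eq_pi. simpl.
  exact (f_equal (@proj1_sig _ _) E).
Qed.

Definition JCat : PreCat :=
  {| ob := JO; hom := fun j k => forall x, dec k x -> dec j x;
     idm := fun j x h => h;
     comp := fun j k m g f x h => f x (g x h) |}.

Lemma JCat_cat : isCat JCat.
Proof. split; [|split]; intros; simpl in *; apply proof_irrelevance. Qed.

Lemma JMor_small : lt_card (Mor JCat) L.
Proof.
  apply le_lt with (JO * JO)%type.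
  - exists (fun m : Mor JCat => (projT1 m, projT1 (projT2 m))).
    intros [j [k h]] [j' [k' h']] E. simpl in E. injection E; intros; subst.
    f_equal. f_equal. simpl in *. apply proof_irrelevance.
  - apply prod_lt; auto; apply JO_small.
Qed.

Lemma J_cofiltered : kappa_cofiltered K JCat.
Proof.
  intros I D HI HIM HD.
  assert (HIo : lt_card I K).
  { apply le_lt with (Mor I); auto.
    exists (fun i => existT (fun a => {b : I & hom a b}) i (existT _ i (idm i))).
    intros x y E. exact (f_equal (@projT1 _ _) E). }
  destruct (cover (fun x => exists i, dec (D i) x)) as [j Hj].
  { apply union_small; auto. intro i. apply dec_small. }
  exists j. exists (fun i x h => Hj x (ex_intro _ i h)).
  intros a b f. exact (proof_irrelevance (forall x, dec (D b) x -> dec j x) _ _).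
Qed.

Definition EJ (j : JO) : Lim (dec j) := getLim Hlex HK (dec j) (dec_small j).
Definition aJ (j : JO) : C := lapex (EJ j).

Definition rJ {j k : JCat} (h : hom j k) : hom (aJ j) (aJ k) :=
  proj1_sig (constructive_indefinite_description _ (r_ex h (EJ j) (EJ k))).
Lemma rJ_spec {j k : JCat} (h : hom j k) s (Hs : dec k s) :
  comp (cmpt (EJ k) s Hs) (rJ h) = cmpt (EJ j) s (h s Hs).
Proof. unfold rJ. destruct (constructive_indefinite_description _ _) as [r Hr]. apply Hr. Qed.

Lemma rJ_N (N : Mod) {j k : JCat} (h : hom j k) s (Hs : dec k s) z :
  fmap (mfun N) (cmpt (EJ k) s Hs) (fmap (mfun N) (rJ h) z) =
  fmap (mfun N) (cmpt (EJ j) s (h s Hs)) z.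
Proof. rewrite <- (rJ_spec h s Hs). symmetry. apply fmap_comp. Qed.

Lemma cmpt_pi {S} (l : Lim S) s (H H' : S s) : cmpt l s H = cmpt l s H'.
Proof. f_equal. apply proof_irrelevance. Qed.

Definition MC := ModCat K L cod fam.
Definition FC := FunCat MC.

Definition evJ (j : JCat) : FC := ev K L cod fam (aJ j).

Definition Dmap {j k : JCat} (h : hom j k) : @hom FC (evJ j) (evJ k).
Proof.
  refine (@Build_NT MC (sfun (evJ j)) (sfun (evJ k))
            (fun N (z : mfun N (aJ j)) => fmap (mfun N) (rJ h) z) _).
  intros N N' psi x. simpl. symmetry. apply (natural psi).
Defined.

Definition DJ : Functor JCat FC := @Build_Functor JCat FC evJ (@Dmap).

Lemma DJ_functor : isFunctor DJ.
Proof.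
  split.
  - intros j. apply NT_ext. intros N z. simpl.
    apply (lim_det HK N (dec_small j)). intros s Hs. rewrite rJ_N. reflexivity.
  - intros j k m f g. apply NT_ext. intros N z. simpl.
    apply (lim_det HK N (dec_small m)). intros s Hs. rewrite !rJ_N. apply (f_equal (fun h => fmap (mfun N) h z)). apply cmpt_pi.
Qed.

Definition Thr (N : MC) : Type :=
  {t : forall j : JO, (mfun N (aJ j) : Type) |
     forall (j k : JCat) (h : hom j k), fmap (mfun N) (rJ h) (t j) = t k}.

Definition aFmap (N N' : MC) (psi : hom N N') (t : Thr N) : Thr N'.
Proof.
  refine (exist _ (fun j => eta psi (aJ j) (proj1_sig t j)) _).
  intros j k h. rewrite <- (natural psi). f_equal. apply (proj2_sig t).
Defined.

Definition aF : Functor MC TypeCat :=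
  @Build_Functor MC TypeCat (fun N => (Thr N : ob TypeCat)) aFmap.

Lemma aF_functor : isFunctor aF.
Proof.
  split.
  - intros N. apply functional_extensionality; intro t. apply sig_eq_pi. reflexivity.
  - intros N1 N2 N3 f g. apply functional_extensionality; intro t. apply sig_eq_pi. reflexivity.
Qed.

Definition aObj : FC := Build_SFObj aF_functor.

Definition pJ (j : JCat) : @hom FC aObj (DJ j).
Proof.
  refine (@Build_NT MC aF (sfun (evJ j)) (fun N (t : Thr N) => proj1_sig t j) _).
  intros; reflexivity.
Defined.

Lemma pJ_cone : isCone DJ aObj pJ.
Proof.
  intros j k h. apply NT_ext. intros N t. simpl. apply (proj2_sig t).
Qed.

Lemma pJ_lim : isLimit DJ aObj pJ.
Proof.
  intros b q Hq.
  assert (Hth : forall N (x : sfun b N) (j k : JCat) (h : hom j k),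
             fmap (mfun N) (rJ h) (eta (q j) N x) = eta (q k) N x).
  { intros N x j k h. exact (f_equal (fun n => eta n N x) (Hq j k h)). }
  pose (u0 := fun N (x : sfun b N) => exist _ (fun j => eta (q j) N x) (Hth N x) : Thr N).
  assert (Hnat : forall N N' (f : hom N N') (x : sfun b N),
             u0 N' (fmap (sfun b) f x) = fmap aF f (u0 N x)).
  { intros N N' f x. apply sig_eq_pi. simpl. apply functional_extensionality_dep; intro j.
    apply (natural (q j)). }
  exists (@Build_NT MC (sfun b) aF u0 Hnat).
  split.
  - intro j. apply NT_ext. intros N x. reflexivity.
  - intros u' Hu'. apply NT_ext. intros N x. apply sig_eq_pi. simpl.
    apply functional_extensionality_dep; intro j.
    exact (f_equal (fun n => eta n N x) (Hu' j)).
Qed.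

Definition jsel (s : X) : JO :=
  proj1_sig (constructive_indefinite_description _
    (cover (fun x => In x (s :: nil)) (list_small _ HK _ (s :: nil)))).
Lemma jsel_spec (s : X) : dec (jsel s) s.
Proof.
  unfold jsel. destruct (constructive_indefinite_description _ _) as [j Hj]. simpl.
  apply Hj. left; reflexivity.
Qed.

Definition cmp (N : MC) (t : Thr N) (s : X) : (mfun N (xdom s) : Type) :=
  fmap (mfun N) (cmpt (EJ (jsel s)) s (jsel_spec s)) (proj1_sig t (jsel s)).

Lemma cmp_any (N : MC) (t : Thr N) (s : X) (j : JO) (H : dec j s) :
  cmp N t s = fmap (mfun N) (cmpt (EJ j) s H) (proj1_sig t j).
Proof.
  destruct (cover (fun x => exists b : bool, if b then dec (jsel s) x else dec j x)) as [j3 Hj3].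
  { apply union_small; auto. apply bool_lt, (proj1 HK). intros []; apply dec_small. }
  pose (h1 := (fun x hx => Hj3 x (ex_intro _ true hx)) : @hom JCat j3 (jsel s)).
  pose (h2 := (fun x hx => Hj3 x (ex_intro _ false hx)) : @hom JCat j3 j).
  unfold cmp. rewrite <- (proj2_sig t j3 (jsel s) h1), <- (proj2_sig t j3 j h2).
  rewrite !rJ_N. apply (f_equal (fun h => fmap (mfun N) h (proj1_sig t j3))). apply cmpt_pi.
Qed.

Definition idS (x : C) (m : mfun M x) : X :=
  existT (fun f : Mor C => (mfun M (projT1 f) : Type))
    (existT (fun a => {b : C & hom a b}) x (existT _ x (idm x))) m.
Definition fS {x y : C} (f : hom x y) (m : mfun M x) : X :=
  existT (fun f : Mor C => (mfun M (projT1 f) : Type))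
    (existT (fun a => {b : C & hom a b}) x (existT _ y f)) m.

Lemma N_constraint (N : MC) {S} (l : Lim S) (c : Cons) (H1 : S (c1 c)) (H2 : S (c2 c)) z :
  fmap (mfun N) (cmpt l (c2 c) H2) z =
  fmap (mfun N) (castm (eR2 c)) (fmap (mfun N) (xarr (c1 c)) (fmap (mfun N) (cmpt l (c1 c) H1) z)).
Proof.
  rewrite <- (lim_constraint l c H1 H2). unfold base. rewrite !fmap_comp. reflexivity.
Qed.

Lemma fmap_castm_refl (N : MC) (a : C) (e : a = a) z : fmap (mfun N) (castm e) z = z.
Proof. rewrite castm_refl. apply fmap_id. Qed.

Definition phi (N : MC) (t : Thr N) : @hom MC M N.
Proof.
  refine (@Build_NT C (mfun M) (mfun N) (fun x m => cmp N t (idS x m)) _).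
  intros x y f m.
  assert (R1 : R2 (idS x m) (fS f m)).
  { unfold R2. simpl. rewrite fmap_id. reflexivity. }
  assert (R3 : R2 (fS f m) (idS y (fmap (mfun M) f m))).
  { reflexivity. }
  pose (cA := exist (fun p => R2 (fst p) (snd p)) (idS x m, fS f m) R1 : Cons).
  pose (cB := exist (fun p => R2 (fst p) (snd p)) (fS f m, idS y (fmap (mfun M) f m)) R3 : Cons).
  destruct (cover (fun s => In s (idS x m :: fS f m :: idS y (fmap (mfun M) f m) :: nil)))
    as [j Hj]. { apply list_small; auto. }
  assert (Ha : dec j (idS x m)) by (apply Hj; simpl; auto).
  assert (Hb : dec j (fS f m)) by (apply Hj; simpl; auto).
  assert (Hc : dec j (idS y (fmap (mfun M) f m))) by (apply Hj; simpl; auto).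
  rewrite (cmp_any N t _ j Ha), (cmp_any N t _ j Hc).
  rewrite (N_constraint N (EJ j) cB Hb Hc).
  rewrite fmap_castm_refl.
  rewrite (N_constraint N (EJ j) cA Ha Hb).
  rewrite fmap_castm_refl. simpl. rewrite fmap_id. reflexivity.
Defined.

Lemma phi_comp (N N' : MC) (psi : @hom MC N N') (t : Thr N) :
  phi N' (aFmap N N' psi t) = compNT psi (phi N t).
Proof.
  apply NT_ext. intros x m. simpl. unfold cmp. simpl. symmetry. apply (natural psi).
Qed.

Definition hF (F : FC) (u : sfun F M) : @hom FC aObj F.
Proof.
  refine (@Build_NT MC aF (sfun F) (fun N t => fmap (sfun F) (phi N t) u) _).
  intros N N' psi t. simpl. rewrite phi_comp.
  pose proof (proj2 (sfun_functor F) M N N' (phi N t) psi) as E.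
  exact (f_equal (fun h => h u) E).
Defined.

Lemma R2_tr_gen (a : C) (x : mfun M a) (z : {a : C & (mfun M a : Type)})
  (H : existT (fun a : C => (mfun M a : Type)) a x = z) :
  fmap (mfun M) (castm (f_equal (@projT1 _ _) H)) x = projT2 z.
Proof. destruct H. simpl. apply fmap_id. Qed.

Lemma t0_compat (j : JO) (c : Cons) (H1 : dec j (c1 c)) (H2 : dec j (c2 c)) :
  fmap (mfun M) (base c true) (xelt (c1 c)) = xelt (c2 c).
Proof.
  unfold base. rewrite fmap_comp. exact (R2_tr_gen _ _ _ (proj2_sig c)).
Qed.

Definition t0j (j : JO) : (mfun M (aJ j) : Type) :=
  proj1_sig (constructive_indefinite_description _
    (lim_exists HK M (dec_small j) (EJ j) (fun s _ => xelt s) (t0_compat j))).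
Lemma t0j_spec (j : JO) s (Hs : dec j s) : fmap (mfun M) (cmpt (EJ j) s Hs) (t0j j) = xelt s.
Proof.
  unfold t0j. destruct (constructive_indefinite_description _ _) as [z Hz]. apply Hz.
Qed.

Definition t0 : Thr M.
Proof.
  refine (exist _ t0j _).
  intros j k h. apply (lim_det HK M (dec_small k)). intros s Hs.
  rewrite rJ_N, !t0j_spec. reflexivity.
Defined.

Lemma phi_t0 : phi M t0 = idNT (mfun M).
Proof. apply NT_ext. intros x m. simpl. unfold cmp. exact (t0j_spec (jsel (idS x m)) (idS x m) (jsel_spec (idS x m))). Qed.

Lemma hF_t0 (F : FC) (u : sfun F M) : eta (hF F u) M t0 = u.
Proof.
  simpl. rewrite phi_t0. pose proof (proj1 (sfun_functor F) M) as E.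
  exact (f_equal (fun h => h u) E).
Qed.

Lemma main_core (F G : FC) (f g : @hom FC F G) (u : sfun F M) :
  eta f M u <> eta g M u ->
  exists s, ev_closure K L cod fam s /\ exists h : @hom FC s F, comp f h <> comp g h.
Proof.
  intros Hu. exists aObj. split.
  - apply (@evc_lim K L C Eix cod fam JCat DJ aObj pJ JCat_cat J_cofiltered JMor_small
             DJ_functor (fun j => evc_base K L fam (aJ j)) pJ_cone pJ_lim).
  - exists (hF F u). intro E. apply Hu.
    pose proof (f_equal (fun n : @hom FC aObj G => eta n M t0) E) as E'. simpl in E'.
    rewrite <- (hF_t0 F u). exact E'.
Qed.

End Shape.

Theorem mainTheorem12 (K L : Type) (C : PreCat) (Eix : Type)
  (cod : Eix -> C) (fam : forall e d, hom d (cod e) -> Prop) :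
  regular_infinite K -> regular_infinite L ->
  sharply_less K L -> lam_lt_lam_eq L ->
  kappa_site K cod fam ->
  lt_card (Mor C) L -> lt_card Eix L ->
  generating (C := FunCat (ModCat K L cod fam)) (ev_closure K L cod fam).
Proof.
  intros HK HL HSL _ Hsite HMor _.
  pose proof (proj1 Hsite) as Hlex. pose proof (proj1 Hlex) as HC.
  intros F G f g Hfg.
  destruct (classic (exists (M : ModObj K L cod fam) (u : sfun F M), eta f M u <> eta g M u))
    as [[M [u Hu]] | Hno].
  - assert (HX : lt_card (X K L C Eix cod fam M) L).
    { apply sig_lt; auto. intro i. apply (mfun_small M). }
    destruct (HSL _ HX) as [Q [HQ1 [HQ2 HQ3]]].
    pose proof HQ3 as [[enc Henc] _].
    exact (main_core K L C Eix cod fam HC M HK HL Hlex Q HQ1 HQ2 HQ3 enc Henc F G f g u Hu).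
  - exfalso. apply Hfg. apply NT_ext. intros M u. apply NNPP. intro Hne.
    apply Hno. exists M, u. exact Hne.
Qed.
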